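(* Let $G$ be a connected nonbipartite graph with vertex set $\{u_1,\dots,u_m\}$ and $\kappa(G)=\delta(G)>0$, and let $n\ge3$. Let $S\subseteq V(G\times K_n)$ satisfy: (1) $|S|=(n-1)\delta(G)$; (2) $S_i\setminus S\neq\varnothing$ for every $i=1,\dots,m$; (3) $G\times K_n-S$ has no isolated vertex. Then $G\times K_n-S$ is connected.
   Context: The Kronecker product $G_1\times G_2$ has vertex set $V(G_1)\times V(G_2)$, with $(u_1,v_1)(u_2,v_2)$ an edge iff $u_1u_2\in E(G_1)$ and $v_1v_2\in E(G_2)$. Write $V(K_n)=\{v_1,\dots,v_n\}$ and $S_i=\{u_i\}\times V(K_n)$ for $i=1,\dots,m$. *)

(* Defs.v *)
From mathcomp Require Import all_boot.
Set Implicit Arguments. Unset Strict Implicit. Unset Printing Implicit Defensive.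

Section Graphs.
Variable T : finType.
Variable e : rel T.

Definition simple_graph : Prop := symmetric e /\ irreflexive e.

Definition induced (A : {set T}) : rel T :=
  fun x y => [&& x \in A, y \in A & e x y].

(* induced subgraph on A is connected (vacuously true when A is empty) *)
Definition connectedb (A : {set T}) : bool :=
  [forall x in A, forall y in A, connect (induced A) x y].

Definition graph_connected : bool := connectedb setT.

Definition bipartite : Prop :=
  exists A : {set T}, forall x y, e x y -> (x \in A) != (y \in A).

Definition deg (x : T) : nat := #|[set y | e x y]|.

(* minimum degree delta(G) (degrees are < #|T|, so #|T| is a neutral top) *)
Definition min_degree : nat := \big[minn/#|T|]_(x : T) deg x.

(* X is a vertex cut in the standard sense for kappa: G - X is disconnected
   or has at most one vertex *)
Definition sep_set (X : {set T}) : bool :=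
  ~~ connectedb (~: X) || (#|~: X| <= 1).

Definition vertex_connectivity : nat :=
  \big[minn/#|T|]_(X : {set T} | sep_set X) #|X|.
End Graphs.

Definition kron_Kn (T : finType) (e : rel T) (n : nat) : rel (T * 'I_n) :=
  fun x y => e x.1 y.1 && (x.2 != y.2).

Definition fibre (T : finType) (n : nat) (u : T) : {set T * 'I_n} :=
  [set x | x.1 == u].

(* Main.v *)
Require Import Defs.
From mathcomp Require Import all_boot.
Set Implicit Arguments. Unset Strict Implicit. Unset Printing Implicit Defensive.

Definition cnt (T : finType) (n : nat) (A : {set T * 'I_n}) (u : T) : nat :=
  #|[set i | (u, i) \in A]|.

Lemma cnt_sum (T : finType) (n : nat) (A : {set T * 'I_n}) u :
  cnt A u = \sum_i ((u,i) \in A : nat).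
Proof.
rewrite /cnt -sum1_card big_mkcond /=; apply: eq_bigr => i _.
by rewrite inE; case: ((u,i) \in A).
Qed.

Lemma card_sum_cnt (T : finType) (n : nat) (A : {set T * 'I_n}) :
  #|A| = \sum_u cnt A u.
Proof.
rewrite (eq_bigr _ (fun u _ => cnt_sum A u)) pair_big /=.
rewrite -sum1_card big_mkcond /=; apply: eq_bigr => [[u i]] _ /=.
by case: ((u,i) \in A).
Qed.

Lemma bigmin_le (I : finType) (P : pred I) (F : I -> nat) top j :
  P j -> \big[minn/top]_(i | P i) F i <= F j.
Proof.
move=> Pj; have : j \in index_enum I by rewrite mem_index_enum.
elim: (index_enum I) => [|a r IH] //=; rewrite big_cons inE.
case/orP=> [/eqP <-|/IH h]; first by rewrite Pj geq_minl.
by case: (P a) => //; apply: leq_trans (geq_minr _ _) h.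
Qed.

Lemma sum_ind (T : finType) (A : {set T}) : \sum_u (u \in A : nat) = #|A|.
Proof. by rewrite -sum1_card [in RHS]big_mkcond /=; apply: eq_bigr => u _; case: (u \in A). Qed.

Lemma closed_connect (T : finType) (r : rel T) (Z : {set T}) x y :
  (forall a b, a \in Z -> r a b -> b \in Z) -> connect r x y -> x \in Z -> y \in Z.
Proof.
move=> hZ /connectP [p hp ->]; elim: p x hp => [|a p IH] x //= /andP [hxa hp] hx.
by apply: IH hp _; apply: hZ hxa.
Qed.
From Stdlib Require Import Lia.
Ltac tolia := repeat match goal with
  | H : is_true (_ <= _) |- _ => move/leP in H
  | H : is_true (_ < _) |- _ => move/ltP in H
  | H : context [addn] |- _ => rewrite -plusE in H
  | H : context [subn] |- _ => rewrite -minusE in H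
  | H : context [muln] |- _ => rewrite -multE in H
  end; try apply/leP; rewrite -?plusE -?minusE -?multE.

Section Split.
Variables (T : finType) (e : rel T) (n : nat) (S C D : {set T * 'I_n}).
Hypothesis hesym : symmetric e.
Hypothesis hpart : forall x, (x \in S) + (x \in C) + (x \in D) = 1.
Hypothesis hnoedge : forall x y, x \in C -> y \in D -> ~~ kron_Kn e x y.
Hypothesis hnoiso : forall x, x \notin S -> exists2 y, y \notin S & kron_Kn e x y.
Hypothesis hfib : forall u, exists i, (u,i) \notin S.

Lemma CnS x : x \in C -> x \notin S.
Proof. by move: (hpart x); case: (x \in S); case: (x \in C); case: (x \in D). Qed.
Lemma DnS x : x \in D -> x \notin S.
Proof. by move: (hpart x); case: (x \in S); case: (x \in C); case: (x \in D). Qed.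
Lemma CnD x : x \in C -> x \notin D.
Proof. by move: (hpart x); case: (x \in S); case: (x \in C); case: (x \in D). Qed.
Lemma covCD x : x \notin S -> (x \in C) || (x \in D).
Proof. by move: (hpart x); case: (x \in S); case: (x \in C); case: (x \in D). Qed.

Lemma kron_sym (x y : T * 'I_n) : kron_Kn e x y = kron_Kn e y x.
Proof. by rewrite /kron_Kn hesym eq_sym. Qed.

Lemma edge_lab u v i j : e u v -> (u,i) \in C -> (v,j) \in D -> i = j.
Proof.
move=> huv hC hD; move: (hnoedge hC hD); rewrite /kron_Kn /= huv /=.
by move/negPn/eqP.
Qed.

Lemma cnt_sum3 u : cnt S u + cnt C u + cnt D u = n.
Proof.
rewrite !cnt_sum -!big_split /=.
by rewrite (eq_bigr (fun _ => 1)) ?sum1_card ?card_ord.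
Qed.

Lemma fib_pos u : 0 < cnt C u + cnt D u.
Proof.
have [i hi] := hfib u; move: (covCD hi) => /orP [h|h].
  by rewrite ltn_addr //; apply/card_gt0P; exists i; rewrite inE.
by rewrite ltn_addl //; apply/card_gt0P; exists i; rewrite inE.
Qed.

Lemma cnt_le1 (A : {set T * 'I_n}) u x :
  (forall i, (u,i) \in A -> i = x) -> cnt A u <= 1.
Proof.
move=> h; rewrite /cnt -(cards1 x); apply: subset_leq_card.
by apply/subsetP => i; rewrite !inE => /h ->.
Qed.

Lemma F1 u : 0 < cnt D u -> cnt C u <= 1.
Proof.
case/card_gt0P => j; rewrite inE => hj.
have [[v x] hy hk] := hnoiso (DnS hj).
have hyD : (v, x) \in D.
  move: (covCD hy) => /orP [hC|//].
  by move: (hnoedge hC hj); rewrite kron_sym hk.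
move: hk; rewrite /kron_Kn /= => /andP [huv _].
apply: (cnt_le1 (x := x)) => i hi; exact: edge_lab huv hi hyD.
Qed.


Hypothesis hconn : graph_connected e.
Hypothesis hkap : vertex_connectivity e = min_degree e.
Hypothesis hn : 3 <= n.
Hypothesis hS : #|S| = (n - 1) * min_degree e.
Hypothesis hDne : exists y, y \in D.

Lemma dC_small a b j : e a b -> (b,j) \in D -> cnt C a <= 1.
Proof. move=> hab hj; apply: (cnt_le1 (x := j)) => i hi; exact: edge_lab hab hi hj. Qed.

Lemma big_case u0 : 2 <= cnt C u0 -> False.
Proof.
move=> hu0.
pose X := [set v | (cnt D v == 0) && (cnt C v <= 1)].
pose A2 := [set v | (cnt D v == 0) && (2 <= cnt C v)].
have dpos : forall v, 0 < cnt D v -> exists j, (v, j) \in D.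
  by move=> v /card_gt0P [j]; rewrite inE => hj; exists j.
have clos : forall a b, a \in A2 -> induced e (~: X) a b -> b \in A2.
  move=> a b; rewrite !inE => /andP [_ ha] /and3P [_ hb hab].
  have hDb : cnt D b == 0.
    rewrite -leqn0 leqNgt; apply/negP => /dpos [j hj].
    by move: (dC_small hab hj); rewrite leqNgt ha.
  by move: hb; rewrite !inE hDb /= -ltnNge.
have hu0D : cnt D u0 == 0.
  rewrite -leqn0 leqNgt; apply/negP => /F1 h.
  by move: (leq_trans hu0 h).
have [[y j0] hy] := hDne.
have hyD : 0 < cnt D y by apply/card_gt0P; exists j0; rewrite inE.
have sepX : sep_set e X.
  rewrite /sep_set; apply/orP; left; apply/negP => hc.
  have hu0X : u0 \in ~: X.
    by rewrite !inE hu0D /= -ltnNge.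
  have hyX : y \in ~: X by rewrite !inE (negbTE (lt0n_neq0 hyD)).
  move: hc => /forall_inP /(_ u0 hu0X) /forall_inP /(_ y hyX) hc.
  have : y \in A2 by apply: (closed_connect clos hc); rewrite inE hu0D.
  by rewrite inE (negbTE (lt0n_neq0 hyD)).
have hdX : min_degree e <= #|X|.
  by rewrite -hkap /vertex_connectivity; apply: (bigmin_le (P := sep_set e)).
pose Z := [set v | cnt D v == 0].
have [w [z [hw hz hwz]]] : exists w z, [/\ w \in Z, z \notin Z & e w z].
  case: (boolP [exists w, exists z, [&& w \in Z, z \notin Z & e w z]]).
    by case/existsP => w /existsP [z /and3P [h1 h2 h3]]; exists w, z.
  rewrite negb_exists => /forallP hno.
  have clZ : forall a b, a \in Z -> induced e setT a b -> b \in Z.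
    move=> a b ha /and3P [_ _ hab]; move: (hno a); rewrite negb_exists.
    move/forallP/(_ b); rewrite ha hab /= andbT; exact: negbNE.
  have hc : connect (induced e setT) u0 y.
    by move: hconn => /forall_inP /(_ u0 (in_setT _)) /forall_inP /(_ y (in_setT _)).
  have : y \in Z by apply: (closed_connect clZ hc); rewrite inE.
  by rewrite inE (negbTE (lt0n_neq0 hyD)).
have hzD : 0 < cnt D z by move: hz; rewrite inE lt0n.
have hzC := F1 hzD.
have hwC : 0 < cnt C w by move: (fib_pos w); move: hw; rewrite inE => /eqP ->; rewrite addn0.
have [i hi] : exists i, (w, i) \in C by move: hwC => /card_gt0P [i]; rewrite inE => hi; exists i.
have hzD1 : cnt D z <= 1.
  apply: (cnt_le1 (x := i)) => j hj; apply/esym; exact: edge_lab hwz hi hj.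
have hzS : 1 <= cnt S z.
  move: (cnt_sum3 z) (hn) => h3 hn3; tolia; lia.
have hsum : \sum_v ((v \in X) * (n - 1) + (v \in [set z])) <= #|S|.
  rewrite card_sum_cnt; apply: leq_sum => v _.
  case: (boolP (v \in [set z])) => [|hvz].
    rewrite inE => /eqP ->.
    have -> : (z \in X) = false by move: hz; rewrite !inE => /negbTE ->.
    by rewrite mul0n.
  rewrite addn0; case: (boolP (v \in X)); rewrite ?mul0n // mul1n inE => /andP [/eqP h1 h2].
  move: (cnt_sum3 v) (hn) => h3 hn3; tolia; lia.
move: hsum; rewrite big_split /= -big_distrl /= !sum_ind cards1 hS => h.
have h2 := leq_mul hdX (leqnn (n - 1)).
move: h (hn) => h hn3; tolia; lia.
Qed.
End Split.

Lemma uniq_lab (T : finType) (n : nat) (A : {set T * 'I_n}) u i j :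
  cnt A u <= 1 -> (u,i) \in A -> (u,j) \in A -> i = j.
Proof.
move=> /card_le1_eqP h hi hj; apply: h; by rewrite inE.
Qed.

Lemma card_setU_le (T : finType) (A B : {set T}) : #|A :|: B| <= #|A| + #|B|.
Proof. by rewrite cardsU leq_subr. Qed.

Lemma deg_lt (T : finType) (e : rel T) x : irreflexive e -> deg e x < #|T|.
Proof.
move=> hirr; rewrite /deg -cardsT; apply: proper_card; apply/properP; split.
  by apply/subsetP => y; rewrite inE.
by exists x; rewrite ?inE ?hirr.
Qed.

Lemma mindeg_le (T : finType) (e : rel T) x : min_degree e <= deg e x.
Proof. by rewrite /min_degree; apply: (bigmin_le (P := xpredT)). Qed.

Section Final.
Variables (T : finType) (e : rel T) (n : nat) (S C D : {set T * 'I_n}).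
Hypothesis hesym : symmetric e.
Hypothesis hirr : irreflexive e.
Hypothesis hpart : forall x, (x \in S) + (x \in C) + (x \in D) = 1.
Hypothesis hnoedge : forall x y, x \in C -> y \in D -> ~~ kron_Kn e x y.
Hypothesis hfib : forall u, exists i, (u,i) \notin S.
Hypothesis hn : 3 <= n.
Hypothesis hS : #|S| = (n - 1) * min_degree e.
Hypothesis hnb : ~ bipartite e.
Hypothesis hC1 : forall u, cnt C u <= 1.
Hypothesis hD1 : forall u, cnt D u <= 1.
Hypothesis hCne : exists x, x \in C.

Lemma edge_lab' u v i j : e u v -> (u,i) \in D -> (v,j) \in C -> i = j.
Proof. move=> huv hi hj; apply/esym; apply: (edge_lab hnoedge _ hj hi); by rewrite hesym. Qed.

Lemma getC u : 0 < cnt C u -> exists i, (u,i) \in C.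
Proof. by case/card_gt0P => i; rewrite inE => h; exists i. Qed.
Lemma getD u : 0 < cnt D u -> exists i, (u,i) \in D.
Proof. by case/card_gt0P => i; rewrite inE => h; exists i. Qed.
Lemma posC u i : (u,i) \in C -> 0 < cnt C u.
Proof. by move=> h; apply/card_gt0P; exists i; rewrite inE. Qed.
Lemma posD u i : (u,i) \in D -> 0 < cnt D u.
Proof. by move=> h; apply/card_gt0P; exists i; rewrite inE. Qed.

Lemma final_case : False.
Proof.
pose M := [set u | (0 < cnt C u) && (0 < cnt D u)].
have sM : forall u, u \in M -> cnt S u = n - 2.
  move=> u; rewrite inE => /andP [h1 h2].
  move: (cnt_sum3 hpart u) (hC1 u) (hD1 u) (hn) => h3 h4 h5 hn3; tolia; lia.
have sK : forall u, u \notin M -> cnt S u = n - 1.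
  move=> u; rewrite inE negb_and -!leqNgt => h.
  move: (cnt_sum3 hpart u) (hC1 u) (hD1 u) (fib_pos hpart hfib u) (hn) => h3 h4 h5 h6 hn3.
  by case/orP: h => h; tolia; lia.
have hsum : (n - 1) * #|~: M| + (n - 2) * #|M| <= #|S|.
  rewrite card_sum_cnt -!sum_ind !big_distrr -big_split /=; apply: leq_sum => u _.
  rewrite inE; case: (boolP (u \in M)) => h /=.
    by rewrite sM // muln0 muln1.
  by rewrite sK // muln0 muln1 addn0.
have [x0 _] := hCne.
case: (set_0Vmem M) => [hM0 | [u0 hu0]].
  move: hsum; rewrite hM0 setC0 cards0 cardsT muln0 addn0 hS => h.
  have h1 := deg_lt x0.1 hirr.
  have h2 := mindeg_le e x0.1.
  have hn1 : 0 < n - 1 by rewrite subn_gt0 (leq_trans _ hn).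
  move: h; rewrite leq_pmul2l // => h.
  by move: (leq_trans h h2) (h1); rewrite ltnNge => ->.
move: (hu0); rewrite inE => /andP [/getC [a ha] /getD [b hb]].
have hab : a != b.
  by apply/eqP => hab; subst b; move: (CnD hpart ha); rewrite hb.
have getM : forall u, u \in M -> exists i j, (u,i) \in C /\ (u,j) \in D.
  move=> u; rewrite inE => /andP [/getC [i hi] /getD [j hj]]; by exists i, j.
case: (set_0Vmem (~: M)) => [hK0 | [k0 hk0]].
  have allM : forall u, u \in M.
    by move=> u; apply/negPn; rewrite -in_setC hK0 inE.
  apply: hnb.
  pose X := [set u : T | [exists i : 'I_n, exists j : 'I_n, [&& (i < j)%N, (u,i) \in C & (u,j) \in D]]].
  have Xchar : forall u i j, (u,i) \in C -> (u,j) \in D -> (u \in X) = (i < j)%N.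
    move=> u i j hi hj; rewrite inE; apply/existsP/idP.
      case=> i' /existsP [j' /and3P [hlt hi' hj']].
      by rewrite (uniq_lab (hC1 u) hi hi') (uniq_lab (hD1 u) hj hj').
    by move=> hlt; exists i; apply/existsP; exists j; rewrite hlt hi hj.
  exists X => x y hxy.
  have [i [j [hi hj]]] := getM x (allM x).
  have [i' [j' [hi' hj']]] := getM y (allM y).
  rewrite (Xchar x i j) // (Xchar y i' j') //.
  have e1 := edge_lab hnoedge hxy hi hj'.
  have e2 := edge_lab' hxy hj hi'.
  subst j' i'.
  case: ltngtP => // /val_inj hij; subst j.
  by move: (CnD hpart hi); rewrite hj.
pose P := [set u in M | ((u,a) \in C) && ((u,b) \in D)].
pose Q := [set u in M | ((u,b) \in C) && ((u,a) \in D)].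
pose KP := [set x in ~: M | ((x,b) \in C) || ((x,a) \in D)].
pose KQ := ~: M :\: KP.
have nonS : forall v, exists i, ((v,i) \in C) || ((v,i) \in D).
  by move=> v; have [i hi] := hfib v; exists i; apply: covCD hi.
have NP : forall p v, p \in P -> e p v -> v \in Q :|: KP.
  move=> p v; rewrite inE => /andP [hpM /andP [hpa hpb]] hpv.
  case: (boolP (v \in M)) => hvM.
    have [i [j [hi hj]]] := getM v hvM.
    have e1 := edge_lab hnoedge hpv hpa hj.
    have e2 := edge_lab' hpv hpb hi.
    by subst; apply/setUP; left; rewrite /Q in_set hvM hi hj.
  have [i /orP [hi|hi]] := nonS v.
    have e2 := edge_lab' hpv hpb hi.
    by subst; apply/setUP; right; rewrite /KP in_set in_setC hvM hi.
  have e1 := edge_lab hnoedge hpv hpa hi.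
  by subst; apply/setUP; right; rewrite /KP in_set in_setC hvM hi orbT.
have NQ : forall q v, q \in Q -> e q v -> v \in P :|: KQ.
  move=> q v; rewrite inE => /andP [hqM /andP [hqb hqa]] hqv.
  case: (boolP (v \in M)) => hvM.
    have [i [j [hi hj]]] := getM v hvM.
    have e1 := edge_lab hnoedge hqv hqb hj.
    have e2 := edge_lab' hqv hqa hi.
    by subst; apply/setUP; left; rewrite /Q in_set hvM hi hj.
  apply/setUP; right; rewrite /KQ in_setD in_setC hvM andbT /KP in_set in_setC hvM /= negb_or.
  apply/andP; split; apply/negP => h.
    by move: hab; rewrite (edge_lab' hqv hqa h) eqxx.
  by move: hab; rewrite (edge_lab hnoedge hqv hqb h) eqxx.
have degb : forall (A : {set T}) x, (forall v, e x v -> v \in A) -> min_degree e <= #|A|.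
  move=> A x hA; apply: (leq_trans (mindeg_le e x)); apply: subset_leq_card.
  by apply/subsetP => v; rewrite inE => /hA.
have hu0P : u0 \in P by rewrite inE hu0 ha hb.
have hdP : min_degree e <= #|Q| + #|KP|.
  exact: leq_trans (degb _ u0 (NP u0 ^~ hu0P)) (card_setU_le _ _).
have hPQ : #|P| + #|Q| <= #|M|.
  rewrite -cardsUI.
  have -> : P :&: Q = set0.
    apply/setP => v; rewrite !inE.
    apply/negP => /andP [/andP [_ /andP [h1 _]] /andP [_ /andP [_ h2]]].
    by move: (CnD hpart h1); rewrite h2.
  rewrite cards0 addn0; apply: subset_leq_card; apply/subsetP => v.
  by rewrite !inE => /orP [/andP [->] | /andP [->]].
have hK : #|KP| + #|KQ| = #|~: M|.
  rewrite -(cardsID KP (~: M)).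
  have -> : ~: M :&: KP = KP.
    by apply/setIidPr/subsetP => v; rewrite /KP in_set => /andP [].
  by [].
have hk : 0 < #|~: M| by apply/card_gt0P; exists k0.
have hm : 0 < #|M| by apply/card_gt0P; exists u0.
have hn2 : 0 < n - 2 by rewrite subn_gt0.
have en1 : n - 1 = (n - 2) + 1 by move: (hn) => hn3; tolia; lia.
move: hsum; rewrite hS en1 !mulnDl !mul1n => hsum.
case: (set_0Vmem Q) => [hQ0 | [q0 hq0]].
  move: hdP; rewrite hQ0 cards0 add0n => hdP.
  have f1 := leq_mul (leqnn (n - 2)) (leq_trans hdP (leq_trans (leq_addr #|KQ| _) (eq_leq hK))).
  have f2 := leq_mul (leqnn (n - 2)) hm.
  rewrite muln1 in f2.
  tolia; lia.
have hdQ : min_degree e <= #|P| + #|KQ|.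
  exact: leq_trans (degb _ q0 (NQ q0 ^~ hq0)) (card_setU_le _ _).
have f1 : (n - 2) * (min_degree e + min_degree e) <= (n - 2) * (#|M| + #|~: M|).
  apply: leq_mul => //; rewrite -hK; move: hdP hdQ hPQ => h1 h2 h3; tolia; lia.
have f2 : min_degree e <= (n - 2) * min_degree e by rewrite leq_pmull.
move: f1; rewrite !mulnDr => f1.
tolia; lia.
Qed.
End Final.

Unset Implicit Arguments.
Set Strict Implicit.

Theorem mainTheorem4 (T : finType) (e : rel T) (n : nat) (S : {set T * 'I_n}) :
  simple_graph e ->
  graph_connected e ->
  ~ bipartite e ->
  vertex_connectivity e = min_degree e ->
  0 < min_degree e ->
  3 <= n ->
  #|S| = (n - 1) * min_degree e ->
  (forall u : T, fibre n u :\: S != set0) ->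
  (forall x, x \notin S -> exists2 y, y \notin S & kron_Kn e x y) ->
  connectedb (kron_Kn e (n:=n)) (~: S).
Proof.
move=> [hesym hirr] hconn hnb hkap hdpos hn hS hfibre hnoiso.
apply/idPn => hnc.
case/forall_inPn: hnc => x0 hx0 /forall_inPn [y0 hy0 hxy].
pose C := [set z | (z \in ~: S) && connect (induced (kron_Kn e (n:=n)) (~: S)) x0 z].
pose D := ~: S :\: C.
have hpart : forall x, (x \in S) + (x \in C) + (x \in D) = 1.
  move=> x; rewrite /D /C !inE; case: (x \in S) => //=.
  by case: connect.
have hnoedge : forall x y, x \in C -> y \in D -> ~~ kron_Kn e x y.
  move=> x y; rewrite /D /C !inE => /andP [hxS hcx] /andP [hyn hyS].
  apply/negP => hk; move: hyn; rewrite hyS /= => /negP; apply.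
  apply: (connect_trans hcx); apply: connect1.
  by rewrite /induced !inE hxS hyS hk.
have hfib : forall u, exists i, (u,i) \notin S.
  move=> u; case/set0Pn: (hfibre u) => [[v i]]; rewrite !inE => /andP [hi /eqP hv].
  by exists i; rewrite -hv.
have hCne : exists x, x \in C by exists x0; rewrite inE hx0 connect0.
have hDne : exists y, y \in D.
  by exists y0; rewrite /D in_setD hy0 andbT inE hy0 /=.
have hC1 : forall u, cnt C u <= 1.
  move=> u; rewrite leqNgt; apply/negP => h.
  exact: (big_case hesym hpart hnoedge hnoiso hfib hconn hkap hn hS hDne h).
have hpart' : forall x, (x \in S) + (x \in D) + (x \in C) = 1.
  by move=> x; rewrite -addnA (addnC (x \in D)) addnA; apply: hpart.
have hnoedge' : forall x y, x \in D -> y \in C -> ~~ kron_Kn e x y.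
  by move=> x y hx hy; rewrite kron_sym //; apply: hnoedge.
have hD1 : forall u, cnt D u <= 1.
  move=> u; rewrite leqNgt; apply/negP => h.
  exact: (big_case hesym hpart' hnoedge' hnoiso hfib hconn hkap hn hS hCne h).
exact: (final_case hesym hirr hpart hnoedge hfib hn hS hnb hC1 hD1 hCne).
Qed.
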